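(* Let the notation be as in the context, and for $\hat u\in U(\mathfrak g)$, $P\in\hat S(\mathfrak g^* )$ put $\langle\hat u,P\rangle_\phi:=\epsilon_S(P\triangleleft\hat u)$. For multiindices $I,J,K$: (iii) if $|I|<|J|$, then every monomial occurring in $\partial^J\triangleleft\hat x_I$ has degree at least $|J|-|I|$; (iv) if $|I|=|J|$, then $\partial^J\triangleleft\hat x_I-I!\,\delta^I_J$ has zero constant term; (v) $\langle\hat x_J,\partial^K\rangle_\phi=K!\,\delta^K_J$ whenever $K\ge J$ in the componentwise partial order; (vi) there is a unique family $\{\partial^{\{K\}}\}_{K\in\mathbb N_0^n}$ of elements of $\hat S(\mathfrak g^* )$ such that $\langle\hat x_J,\partial^{\{K\}}\rangle_\phi=K!\,\delta^K_J$ for all multiindices $K,J$.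
   Context: Let $k$ be a field of characteristic zero and $\mathfrak g$ a Lie algebra over $k$ of finite dimension $n$ with basis $\hat x_1,\dots,\hat x_n$ and $[\hat x_\mu,\hat x_\nu]=C^\lambda_{\mu\nu}\hat x_\lambda$; summation over repeated indices is understood. $U(\mathfrak g)$ is its universal enveloping algebra (a cocommutative Hopf algebra with $\hat x_\mu$ primitive, counit $\epsilon$, Sweedler notation $\Delta(u)=\sum u_{(1)}\otimes u_{(2)}$). $\hat S(\mathfrak g^* ):=k[[\partial^1,\dots,\partial^n]]$, and $\epsilon_S:\hat S(\mathfrak g^* )\to k$ is the constant-term map. Let $\mathcal C^\alpha_\beta:=C^\alpha_{\beta\gamma}\partial^\gamma$ and $\phi:=\frac{-\mathcal C}{e^{-\mathcal C}-1}=\sum_{N\ge0}\frac{(-1)^NB_N}{N!}\mathcal C^N$ ($B_N$ Bernoulli numbers), a matrix with entries in $\hat S(\mathfrak g^* )$. It is known (and assumed) that there is a unique right Hopf action $\triangleleft$ of $U(\mathfrak g)$ on $\hat S(\mathfrak g^* )$ (i.e. $(a\triangleleft u)\triangleleft v=a\triangleleft(uv)$, $(ab)\triangleleft u=\sum(a\triangleleft u_{(1)})(b\triangleleft u_{(2)})$, $1\triangleleft u=\epsilon(u)1$) such that $a\mapsto a\triangleleft\hat x_\alpha$ is the continuous derivation sending $\partial^\beta\mapsto\phi^\beta_\alpha$. For a multiindex $K=(k_1,\dots,k_n)\in\mathbb N_0^n$: $|K|=k_1+\dots+k_n$, $K!=k_1!\cdots k_n!$, $\hat x_K:=\hat x_1^{k_1}\cdots\hat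 x_n^{k_n}\in U(\mathfrak g)$, $\partial^K:=(\partial^1)^{k_1}\cdots(\partial^n)^{k_n}$, and $\delta^K_J$ is $1$ if $K=J$ and $0$ otherwise. *)

(* Defs.v *)
From HB Require Import structures.
From mathcomp Require Import all_boot all_order all_algebra.
Set Implicit Arguments. Unset Strict Implicit. Unset Printing Implicit Defensive.
Import Order.TTheory GRing.Theory Num.Theory.
Local Open Scope ring_scope.

Definition mi (n : nat) := {ffun 'I_n -> nat}.
Definition mi0 {n : nat} : mi n := [ffun => 0%N].
Definition mdeg {n : nat} (K : mi n) : nat := (\sum_(i < n) K i)%N.
Definition mfact {n : nat} (K : mi n) : nat := (\prod_(i < n) (K i)`!)%N.
Definition mle {n : nat} (J K : mi n) : bool := [forall i, J i <= K i]%N.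
Definition munit {n : nat} (b : 'I_n) : mi n := [ffun i => (i == b : nat)].
Definition madd {n : nat} (A B : mi n) : mi n := [ffun i => A i + B i]%N.

Section PS.
Variables (k : fieldType) (n : nat).

(* \hat S(g^* ) = k[[d^1,...,d^n]]: a formal power series is its coefficient
   function on multiindices (coefficient of the monomial d^M). *)
Definition ps := mi n -> k.

Definition ps_add (P Q : ps) : ps := fun M => P M + Q M.
Definition ps_zero : ps := fun _ => 0.
Definition ps_scale (c : k) (P : ps) : ps := fun M => c * P M.
Definition ps_mon (K : mi n) : ps := fun M => (M == K)%:R.
Definition epsS (P : ps) : k := P mi0.

(* Cauchy product: (PQ)_M = sum_{A <= M} P_A Q_{M-A}.  The multiindices
   A <= M are enumerated as ffuns into 'I_(|M|+1). *)
Definition ps_mul (P Q : ps) : ps := fun M =>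
  \sum_(A : {ffun 'I_n -> 'I_(mdeg M).+1} | [forall i, (A i <= M i)%N])
     P [ffun i => (A i : nat)] * Q [ffun i => (M i - A i)%N].

Definition ps_pd (b : 'I_n) (P : ps) : ps := fun M =>
  (M b).+1%:R * P (madd M (munit b)).

(* square matrices with entries in \hat S(g^* ): A a b = entry (row a, col b) *)
Definition psmx := 'I_n -> 'I_n -> ps.
Definition psmx_mul (A B : psmx) : psmx := fun a b =>
  fun M => \sum_(c < n) ps_mul (A a c) (B c b) M.
Definition psmx_one : psmx := fun a b => if a == b then ps_mon mi0 else ps_zero.
Definition psmx_exp (A : psmx) (N : nat) : psmx := iter N (psmx_mul A) psmx_one.

End PS.
Arguments ps_add {k n}. Arguments ps_zero {k n}. Arguments ps_scale {k n}.
Arguments ps_mon {k n}. Arguments epsS {k n}. Arguments ps_mul {k n}.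
Arguments ps_pd {k n}. Arguments psmx_mul {k n}. Arguments psmx_one {k n}.
Arguments psmx_exp {k n}.

(* Bernoulli numbers, B_0 = 1, sum_{k=0}^{m} C(m+1,k) B_k = 0 (m >= 1),
   so that x/(e^x - 1) = sum_N B_N x^N / N!  (B_1 = -1/2). *)
Fixpoint bern_list (m : nat) : seq rat :=
  match m with
  | 0 => [:: 1]
  | m'.+1 => let s := bern_list m' in
      rcons s (- (\sum_(j < m'.+1) ('C(m'.+2, j))%:R * nth 0 s j) / (m'.+2)%:R)
  end.
Definition bernoulli (m : nat) : rat := last 0 (bern_list m).

Section Lie.
Variables (k : fieldType) (n : nat).
(* structure constants: Cst l m nu = C^l_{m nu}, [x_m, x_nu] = C^l_{m nu} x_l *)
Variable Cst : 'I_n -> 'I_n -> 'I_n -> k.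

Definition lie_structure_constants : Prop :=
  (forall l m nu, Cst l m nu = - Cst l nu m) /\
  (forall r m nu s,
     \sum_(l < n) (Cst l m nu * Cst r l s + Cst l nu s * Cst r l m
                   + Cst l s m * Cst r l nu) = 0).

Definition calC : psmx k n := fun a b =>
  fun M => \sum_(c < n) Cst a b c * ps_mon (munit c) M.

(* phi = -C/(e^{-C}-1) = sum_N (-1)^N B_N / N! C^N.  The coefficient of d^M of
   the N-th summand vanishes for N > |M| (C^N is homogeneous of degree N), so
   the coefficientwise sum is finite. *)
Definition phi : psmx k n := fun a b => fun M =>
  \sum_(N < (mdeg M).+1)
     ((-1) ^+ N * ratr (bernoulli N) / (N`!)%:R) * psmx_exp calC N a b M.

(* D_alpha := (_ <| x_alpha): the continuous derivation of k[[d]] with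
   d^beta |-> phi^beta_alpha, i.e. D_alpha P = sum_beta phi^beta_alpha * dP/dd^beta. *)
Definition Dx (alpha : 'I_n) (P : ps k n) : ps k n := fun M =>
  \sum_(beta < n) ps_mul (phi beta alpha) (ps_pd beta P) M.

(* P <| x_I for x_I = x_1^{i_1} ... x_n^{i_n}: by the right action property
   (P <| u) <| v = P <| (u v), first apply D_1 i_1 times, then D_2 i_2 times, ... *)
Definition act_mon (P : ps k n) (I : mi n) : ps k n :=
  foldl (fun Q i => iter (I i) (Dx i) Q) P (enum 'I_n).

Definition pairing (I : mi n) (P : ps k n) : k := epsS (act_mon P I).
End Lie.
Arguments calC {k n}. Arguments phi {k n}. Arguments Dx {k n}.
Arguments act_mon {k n}. Arguments pairing {k n}.

(* Main.v *)
Require Import Defs.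
From HB Require Import structures.
From mathcomp Require Import all_boot all_order all_algebra.
From mathcomp Require Import zify.
From Stdlib Require Import FunctionalExtensionality.
Import Order.TTheory GRing.Theory Num.Theory.
Local Open Scope ring_scope.
Set Implicit Arguments. Unset Strict Implicit.

Lemma mdeg_enum n (I : mi n) : mdeg I = (\sum_(i <- enum 'I_n) I i)%N.
Proof. by rewrite /mdeg big_enum. Qed.

Lemma mdeg_mi0 n : mdeg (@mi0 n) = 0%N.
Proof. by rewrite /mdeg big1 // => i _; rewrite ffunE. Qed.

Lemma mdeg_addu n (M : mi n) b : mdeg (madd M (munit b)) = (mdeg M).+1.
Proof.
rewrite /mdeg (eq_bigr (fun i => M i + (i == b))%N); last by move=> i _; rewrite !ffunE.
rewrite big_split /=.
have -> : (\sum_(i < n) (i == b) = 1)%N.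
  by rewrite (bigD1 b) //= eqxx big1 ?addn0 // => i /negPf ->.
by rewrite addn1.
Qed.

Lemma sum_lt n (F G : 'I_n -> nat) : (forall i, F i <= G i)%N -> (exists i, F i < G i)%N ->
  (\sum_(i < n) F i < \sum_(i < n) G i)%N.
Proof.
move=> H [i Hi]; rewrite (bigD1 i) //= [X in (_ < X)%N](bigD1 i) //=.
rewrite -addSn; apply: leq_add => //; exact: leq_sum.
Qed.

Section Main.
Variables (k : fieldType) (n : nat) (Cst : 'I_n -> 'I_n -> 'I_n -> k).

Definition low (P : ps k n) (d : nat) := forall M, P M != 0 -> (d <= mdeg M)%N.

Lemma low0 P : low P 0. Proof. by []. Qed.

Lemma phi0 b a : phi Cst b a mi0 = (b == a)%:R.
Proof.
rewrite /phi mdeg_mi0 big_ord1 /= (_ : bernoulli 0 = 1%:R) // ratr_nat expr0 mul1r fact0 divr1 mul1r.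
rewrite /psmx_one; case: (b == a) => //.
by rewrite /ps_mon eqxx.
Qed.

Lemma mdeg_sub (M A : mi n) : (mdeg [ffun i => M i - A i]%N <= mdeg M)%N.
Proof. by rewrite /mdeg; apply: leq_sum => i _; rewrite ffunE leq_subr. Qed.

Lemma pd_low P d b : low P d.+1 -> low (ps_pd b P) d.
Proof.
move=> H M; rewrite /ps_pd; have [->|] := eqVneq (P (madd M (munit b))) 0.
  by rewrite mulr0 eqxx.
by move/H; rewrite mdeg_addu.
Qed.

Lemma Dx_low1 P d a : low P d.+1 -> forall M, (mdeg M < d)%N -> Dx Cst a P M = 0.
Proof.
move=> H M HM; rewrite /Dx big1 // => b _; rewrite /ps_mul big1 // => A _.
have HP := pd_low (b:=b) H.
have [->|/HP] := eqVneq (ps_pd b P [ffun i => M i - A i]%N) 0; first by rewrite mulr0.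
have := mdeg_sub M [ffun i => (A i : nat)].
have -> : [ffun i => M i - [ffun i => (A i:nat)] i]%N = [ffun i => M i - A i]%N.
  by apply/ffunP=> i; rewrite !ffunE.
lia.
Qed.

Lemma Dx_low P d a : low P d -> low (Dx Cst a P) d.-1.
Proof.
case: d => // d H M; apply: contraR; rewrite -ltnNge /= => HM.
by rewrite (Dx_low1 a H HM) eqxx.
Qed.

Lemma Dx_pd P d a : low P d.+1 -> forall M, mdeg M = d -> Dx Cst a P M = ps_pd a P M.
Proof.
move=> H M HM.
have E : forall b, ps_mul (phi Cst b a) (ps_pd b P) M = (b == a)%:R * ps_pd b P M.
  move=> b; rewrite /ps_mul (bigD1 [ffun _ : 'I_n => @ord0 (mdeg M)]) /=; last by apply/forallP=> i; rewrite ffunE.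
  rewrite big1 ?addr0.
    have -> : [ffun i : 'I_n => ([ffun _ : 'I_n => @ord0 (mdeg M)] i : nat)] = @mi0 n.
      by apply/ffunP=> i; rewrite !ffunE.
    have -> : [ffun i : 'I_n => M i - [ffun _ : 'I_n => @ord0 (mdeg M)] i]%N = M.
      by apply/ffunP=> i; rewrite !ffunE subn0.
    by rewrite phi0.
  move=> A /andP [/forallP HA HA0].
  have [i Hi] : exists i, (0 < A i)%N.
    apply/existsP; rewrite -[X in is_true X]negbK negb_exists; apply: contra HA0 => /forallP H0.
    apply/eqP/ffunP=> i; rewrite ffunE; apply/val_inj => /=.
    by have := H0 i; rewrite lt0n negbK => /eqP.
  have Hlt : (mdeg [ffun i => M i - A i]%N < mdeg M)%N.
    apply: sum_lt; first by move=> j; rewrite ffunE leq_subr.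
    exists i; rewrite ffunE; have := HA i; lia.
  have HP := pd_low (b:=b) H.
  have [->|/HP] := eqVneq (ps_pd b P [ffun i => M i - A i]%N) 0; first by rewrite mulr0.
  lia.
rewrite /Dx (eq_bigr _ (fun b _ => E b)) (bigD1 a) //= eqxx mul1r big1 ?addr0 //.
by move=> b /negPf ->; rewrite mul0r.
Qed.

Definition agree (d : nat) (P Q : ps k n) :=
  [/\ low P d, low Q d & forall M, mdeg M = d -> P M = Q M].

Lemma agree_step d P Q a : agree d.+1 P Q -> agree d (Dx Cst a P) (ps_pd a Q).
Proof.
case=> HP HQ HPQ; split; first by have := Dx_low (a:=a) HP.
  exact: pd_low.
move=> M HM; rewrite (Dx_pd a HP HM) /ps_pd HPQ // mdeg_addu HM //.
Qed.

Lemma agree_iter m d P Q a : agree (m + d) P Q ->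
  agree d (iter m (Dx Cst a) P) (iter m (ps_pd a) Q).
Proof.
elim: m d => [|m IH] d H //=.
apply: agree_step; apply: IH; by rewrite addnS -addSn.
Qed.

Definition actg (f : 'I_n -> ps k n -> ps k n) (P : ps k n) (I : mi n) s :=
  foldl (fun Q i => iter (I i) (f i) Q) P s.

Lemma agree_fold (I : mi n) s d P Q : agree (\sum_(i <- s) I i + d) P Q ->
  agree d (actg (Dx Cst) P I s) (actg ps_pd Q I s).
Proof.
elim: s P Q => [|a s IH] P Q /=; first by rewrite big_nil.
rewrite big_cons -addnA => H; apply: IH; exact: agree_iter.
Qed.

Lemma low_fold (I : mi n) s d P : low P d ->
  low (actg (Dx Cst) P I s) (d - \sum_(i <- s) I i).
Proof.
elim: s d P => [|a s IH] d P /=; first by rewrite big_nil subn0.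
rewrite big_cons subnDA => H; apply: IH.
elim: (I a) {H} (H) => [|m IHm] /=; first by rewrite subn0.
by move=> H; rewrite subnS; apply: Dx_low; apply: IHm.
Qed.

Definition shift (M : mi n) a m : mi n := [ffun i => if i == a then M i + m else M i]%N.
Definition sh (s : seq 'I_n) (I M : mi n) : mi n :=
  [ffun i => if i \in s then M i + I i else M i]%N.

Lemma pd_iter m a (P : ps k n) (M : mi n) :
  ((M a)`!)%:R * iter m (ps_pd a) P M = ((M a + m)`!)%:R * P (shift M a m).
Proof.
elim: m M => [|m IH] M /=.
  by rewrite addn0; congr (_ * P _); apply/ffunP=> i; rewrite ffunE; case: eqP => // ->; rewrite addn0.
rewrite /ps_pd mulrA -natrM mulnC -factS.
have E : (madd M (munit a)) a = (M a).+1 by rewrite !ffunE eqxx addn1.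
rewrite -E IH E addSnnS; congr (_ * P _).
by apply/ffunP=> i; rewrite !ffunE; case: eqP => [->|]; rewrite ?eqxx /= ?addn0 // addn1 addSnnS.
Qed.

Lemma pd_fold s (I : mi n) (P : ps k n) (M : mi n) : uniq s ->
  ((\prod_(i <- s) (M i)`!)%N)%:R * actg ps_pd P I s M =
  ((\prod_(i <- s) (M i + I i)`!)%N)%:R * P (sh s I M).
Proof.
elim: s P M => [|a s IH] P M /=.
  by move=> _; rewrite !big_nil /actg /= !mul1r; congr (P _); apply/ffunP=> i; rewrite ffunE.
case/andP=> Has Hs; rewrite !big_cons !natrM /actg /= -/(actg _ _ I s).
rewrite -mulrA IH // mulrCA.
have Ea : (sh s I M) a = M a by rewrite ffunE (negPf Has).
have Hit := pd_iter (I a) a P (sh s I M); rewrite Ea in Hit; rewrite Hit mulrCA -mulrA.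
congr (_ * (_ * P _)).
apply/ffunP=> i; rewrite !ffunE in_cons; case: (eqVneq i a) => [->|Hia] /=.
  by rewrite (negPf Has).
by [].
Qed.

Lemma act_pd0 (I : mi n) (P : ps k n) : actg ps_pd P I (enum 'I_n) mi0 = (mfact I)%:R * P I.
Proof.
have := pd_fold I P mi0 (enum_uniq 'I_n).
rewrite big1 ?mul1r; last by move=> i _; rewrite ffunE.
move=> ->; rewrite /mfact -big_enum /=; congr (_%:R * P _).
  by apply: eq_bigr => i _; rewrite ffunE.
by apply/ffunP=> i; rewrite !ffunE mem_enum.
Qed.

Definition psub (P Q : ps k n) : ps k n := fun M => P M - Q M.

Lemma Dx_sub a P Q : Dx Cst a (psub P Q) = psub (Dx Cst a P) (Dx Cst a Q).
Proof.
apply: functional_extensionality => M; rewrite /Dx /psub -sumrB; apply: eq_bigr => b _.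
rewrite /ps_mul -sumrB; apply: eq_bigr => A _; by rewrite /ps_pd /psub !mulrBr.
Qed.

Lemma act_sub J P Q : act_mon Cst (psub P Q) J = psub (act_mon Cst P J) (act_mon Cst Q J).
Proof.
rewrite /act_mon; elim: (enum 'I_n) P Q => [|a s IH] P Q //=.
rewrite -IH; congr foldl; elim: (J a) => [|m IHm] //=; by rewrite IHm Dx_sub.
Qed.

Lemma pair_sub J P Q : pairing Cst J (psub P Q) = pairing Cst J P - pairing Cst J Q.
Proof. by rewrite /pairing act_sub. Qed.

Lemma pair_low J P : low P (mdeg J) -> pairing Cst J P = (mfact J)%:R * P J.
Proof.
move=> HP.
have H : agree (\sum_(i <- enum 'I_n) J i + 0) P P by rewrite addn0 -mdeg_enum; split.
have [_ _ E] := agree_fold H.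
rewrite /pairing /epsS.
change (act_mon Cst P J) with (actg (Dx Cst) P J (enum 'I_n)).
by rewrite E ?mdeg_mi0 // act_pd0.
Qed.

Lemma pair_van J P d : low P d.+1 -> (mdeg J <= d)%N -> pairing Cst J P = 0.
Proof.
move=> H HJ; have := low_fold (I:=J) (s:=enum 'I_n) H; rewrite -mdeg_enum => HL.
rewrite /pairing /epsS; apply/eqP; apply: contraT => /HL; rewrite mdeg_mi0; lia.
Qed.
End Main.

Section Exist.
Variables (k : fieldType) (n : nat) (Cst : 'I_n -> 'I_n -> 'I_n -> k).

Fixpoint Tseq (K : mi n) (d : nat) : ps k n :=
  match d with
  | 0 => fun _ => 0
  | d'.+1 => fun M => if (mdeg M < d')%N then Tseq K d' M
      else if mdeg M == d' then
        ((mfact K)%:R * (K == M)%:R - pairing Cst M (Tseq K d')) / (mfact M)%:R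
      else 0
  end.

Lemma T_high K d M : (d <= mdeg M)%N -> Tseq K d M = 0.
Proof.
elim: d => [|d IH] //= H.
rewrite ltnNge (ltnW H) /=; case: eqP => // E; lia.
Qed.

Lemma T_stab K e M : (mdeg M < e)%N -> Tseq K e M = Tseq K (mdeg M).+1 M.
Proof.
elim: e => [|e IH] // H.
have [lt|ge] := ltnP (mdeg M) e; first by rewrite /= lt IH.
by have -> : e = mdeg M by lia.
Qed.

Lemma mfact_neq0 (hk : [pchar k] =i pred0) (M : mi n) : (mfact M)%:R != 0 :> k.
Proof.
have /pcharf0P -> : has_pchar0 k by [].
by rewrite -lt0n /mfact prodn_gt0 // => i; rewrite fact_gt0.
Qed.

Lemma T_pair (hk : [pchar k] =i pred0) K J :
  pairing Cst J (Tseq K (mdeg J).+1) = (mfact K)%:R * (K == J)%:R.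
Proof.
set d := mdeg J.
have HD : low (psub (Tseq K d.+1) (Tseq K d)) d.
  move=> M; rewrite /psub; apply: contraR; rewrite -ltnNge => lt /=.
  by rewrite lt subrr.
have := pair_low Cst HD; rewrite pair_sub /psub (T_high K (leqnn d)) subr0 /= ltnn eqxx.
rewrite mulrC divfK ?mfact_neq0 // => /eqP; rewrite subr_eq subrK => /eqP.
done.
Qed.

Lemma F_pair (hk : [pchar k] =i pred0) K J :
  pairing Cst J (fun M => Tseq K (mdeg M).+1 M) = (mfact K)%:R * (K == J)%:R.
Proof.
have HL : low (psub (fun M => Tseq K (mdeg M).+1 M) (Tseq K (mdeg J).+1)) (mdeg J).+1.
  move=> M; rewrite /psub; apply: contraR; rewrite -ltnNge => lt.
  by rewrite -(T_stab K lt) subrr.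
have := pair_van Cst HL (leqnn _); rewrite pair_sub T_pair // => /eqP.
by rewrite subr_eq0 => /eqP.
Qed.

Lemma pair_uniq (hk : [pchar k] =i pred0) P :
  (forall J, pairing Cst J P = 0) -> forall M, P M = 0.
Proof.
move=> H.
have HL : forall d, low P d.
  elim=> [|d IH] M HM //; have := IH M HM; rewrite leq_eqVlt => /orP [/eqP E|//].
  have := pair_low Cst (P:=P) (J:=M); rewrite -E => /(_ IH); rewrite H => /esym /eqP.
  by rewrite mulf_eq0 (negPf (mfact_neq0 hk M)) /= (negPf HM).
move=> M; apply/eqP; apply: contraT => /(HL (mdeg M).+1); by rewrite ltnn.
Qed.
End Exist.

Unset Implicit Arguments.
Set Strict Implicit.

Theorem lemma1 (k : fieldType) (hk : [pchar k] =i pred0) (n : nat)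
  (Cst : 'I_n -> 'I_n -> 'I_n -> k)
  (hLie : lie_structure_constants Cst) :
  (* (iii) *)
  (forall I J : mi n, (mdeg I < mdeg J)%N ->
     forall M : mi n, act_mon Cst (ps_mon J) I M != 0 ->
       (mdeg J - mdeg I <= mdeg M)%N) /\
  (* (iv) *)
  (forall I J : mi n, mdeg I = mdeg J ->
     epsS (ps_add (act_mon Cst (ps_mon J) I)
                  (ps_scale (- ((mfact I)%:R * (I == J)%:R)) (ps_mon mi0))) = 0) /\
  (* (v) *)
  (forall J K : mi n, mle J K ->
     pairing Cst J (ps_mon K) = (mfact K)%:R * (K == J)%:R) /\
  (* (vi) *)
  (exists! F : mi n -> ps k n,
     forall K J : mi n, pairing Cst J (F K) = (mfact K)%:R * (K == J)%:R).
Proof.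
have monlow : forall J : mi n, low (@ps_mon k n J) (mdeg J).
  by move=> J M; rewrite /ps_mon; have [->|_] := eqVneq M J => //=; rewrite eqxx.
split.
  move=> I J _ M; have := low_fold (Cst:=Cst) (I:=I) (s:=enum 'I_n) (monlow J).
  by rewrite -mdeg_enum; apply.
split.
  move=> I J E; rewrite /epsS /ps_add /ps_scale.
  have := pair_low Cst (J:=I) (P:=ps_mon J); rewrite E => /(_ (monlow J)).
  rewrite /pairing /epsS => ->; rewrite /ps_mon !eqxx mulr1.
  by rewrite [I == J]eq_sym subrr.
split.
  move=> J K HJK; have [->|ne] := eqVneq K J.
    by rewrite (pair_low Cst (monlow J)) /ps_mon !eqxx.
  rewrite ?(negPf ne) mulr0.
  have lt : (mdeg J < mdeg K)%N.
    apply: sum_lt; first by move=> i; exact: (forallP HJK i).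
    apply/existsP; rewrite -[X in is_true X]negbK negb_exists; apply: contra ne => /forallP H.
    apply/eqP/ffunP=> i; apply/eqP; rewrite eqn_leq (forallP HJK i) andbT.
    by have := H i; rewrite -leqNgt.
  have hp : (0 < mdeg K)%N by lia.
  have HL : low (@ps_mon k n K) (mdeg K).-1.+1 by rewrite prednK //; exact: monlow.
  apply: (pair_van Cst HL); lia.
exists (fun K M => Tseq Cst K (mdeg M).+1 M); split.
  by move=> K J; apply: F_pair.
move=> G HG; apply: functional_extensionality => K; apply: functional_extensionality => M.
suff HP : psub (fun M => Tseq Cst K (mdeg M).+1 M) (G K) M = 0.
  by move: HP; rewrite /psub => /eqP; rewrite subr_eq0 => /eqP.
apply: (pair_uniq (Cst:=Cst) hk) => J.
by rewrite pair_sub F_pair // HG subrr.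
Qed.
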